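(* Let $k\ge0$ and $l\ge1$. Then $$H^{(k)}=\sum_{\substack{0<n<b^{l-1}\\ k(n)=k}}\frac1n+b\sum_{\substack{b^{l-1}\le n<b^l\\ k(n)\le k}}\frac1n+\sum_{m=1}^\infty(-1)^m\sum_{\substack{b^{l-1}\le n<b^l\\ k(n)\le k}}\frac{u_{k-k(n);m}}{n^{m+1}},$$ and also $$H^{(k)}=\sum_{\substack{0<n<b^{l-1}\\ k(n)=k}}\frac1n+b\sum_{\substack{b^{l-1}\le n<b^l\\ k(n)\le k}}\frac1{n+1}+\sum_{m=1}^\infty\sum_{\substack{b^{l-1}\le n<b^l\\ k(n)\le k}}\frac{v_{k-k(n);m}}{(n+1)^{m+1}}.$$
   Context: Fix $b\ge2$ and $d\in\{0,\dots,b-1\}$. For an integer $n\ge0$, $k(n)$ is the number of occurrences of $d$ in its base-$b$ representation without leading zeros, and $H^{(k)}=\sum_{n\ge1,\ k(n)=k}1/n$. A string is a finite sequence $X=(d_l,\dots,d_1)$ of digits in $\{0,\dots,b-1\}$ (leading zeros allowed), of length $|X|=l\ge0$; its value is $n(X)=\sum_{i=1}^{l}d_ib^{i-1}$ ($0$ for the empty string). For $k\ge0$, $\mu_k=\sum_{X}b^{-|X|}\delta_{n(X)/b^{|X|}}$, the sum over all strings $X$ containing $d$ exactly $k$ times; it is a finite measure on $[0,1)$ of total mass $b$. Moments: $u_{k;m}=\int_{[0,1)}x^m\,d\mu_k(x)$ and $v_{k;m}=\int_{[0,1)}(1-x)^m\,d\mu_k(x)$ (with $0^0=1$). *)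

(* Defs.v *)
From Stdlib Require Import Reals Lra Lia Arith List.
From Coquelicot Require Import Coquelicot.
Open Scope R_scope.

Definition rsum (N : nat) (f : nat -> R) : R :=
  fold_right (fun i acc => f i + acc) 0 (List.seq 0 N).

Fixpoint cnt_len (b d : nat) (len n : nat) : nat :=
  match len with
  | O => O
  | S len' => (if Nat.eqb (n mod b) d then 1 else 0)%nat + cnt_len b d len' (n / b)
  end.

(* Recursion: k(0) = 0 (empty representation; only n >= 1 is used),
   k(n) = [n mod b = d] + k(n / b) for n >= 1.  Fuel n suffices since n/b < n. *)
Fixpoint kdig_aux (b d : nat) (fuel n : nat) : nat :=
  match fuel with
  | O => O
  | S f => if Nat.eqb n 0 then O
           else ((if Nat.eqb (n mod b) d then 1 else 0)%nat + kdig_aux b d f (n / b))%nat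
  end.
Definition kdig (b d n : nat) : nat := kdig_aux b d n n.

Definition Hterm (b d k n : nat) : R :=
  if andb (1 <=? n)%nat (Nat.eqb (kdig b d n) k) then / INR n else 0.
Definition H (b d k : nat) : R := Series (Hterm b d k).

(* Strings of length l are identified with their values x in [0, b^l) (digits
   d_l ... d_1, leading zeros allowed); the string contains d exactly
   cnt_len b d l x times.  mu_k = sum_X b^{-|X|} delta_{n(X)/b^|X|}, so
   integrals against mu_k are the corresponding weighted sums, grouped by
   string length l. *)
Definition mu_integral (b d k : nat) (g : R -> R) : R :=
  Series (fun l : nat =>
    rsum (b ^ l) (fun x => if Nat.eqb (cnt_len b d l x) k
                           then / INR (b ^ l) * g (INR x / INR (b ^ l)) else 0)).

(* u_{k;m} = int x^m dmu_k,  v_{k;m} = int (1-x)^m dmu_k  (pow: 0^0 = 1). *)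
Definition u_mom (b d k m : nat) : R := mu_integral b d k (fun x => x ^ m).
Definition v_mom (b d k m : nat) : R := mu_integral b d k (fun x => (1 - x) ^ m).

Definition low_part (b d k l : nat) : R :=
  rsum (b ^ (l - 1)) (fun n => if andb (1 <=? n)%nat (Nat.eqb (kdig b d n) k)
                               then / INR n else 0).

Definition block_sum (b d k l : nat) (f : nat -> R) : R :=
  rsum (b ^ l) (fun n => if andb (b ^ (l - 1) <=? n)%nat (kdig b d n <=? k)%nat
                         then f n else 0).

Definition tail_u (b d k l m : nat) : R :=
  (-1) ^ m * block_sum b d k l
    (fun n => u_mom b d (k - kdig b d n) m / INR n ^ (m + 1)).
Definition tail_v (b d k l m : nat) : R :=
  block_sum b d k l
    (fun n => v_mom b d (k - kdig b d n) m / INR (n + 1) ^ (m + 1)).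

(* Main.v *)
Require Import Defs.
From Stdlib Require Import Reals Lra Lia Arith List.
From Coquelicot Require Import Coquelicot.
Open Scope R_scope.

Lemma rsum_0 f : rsum 0 f = 0.
Proof. reflexivity. Qed.

Lemma fold_shift (f : nat -> R) s n :
  fold_right (fun i acc => f i + acc) 0 (seq (S s) n) =
  fold_right (fun i acc => f (S i) + acc) 0 (seq s n).
Proof. revert s; induction n; intros s; simpl; auto. rewrite IHn; auto. Qed.

Lemma rsum_Sl N f : rsum (S N) f = f 0%nat + rsum N (fun i => f (S i)).
Proof. unfold rsum. simpl. rewrite fold_shift. reflexivity. Qed.

Lemma rsum_S N f : rsum (S N) f = rsum N f + f N.
Proof.
  revert f; induction N; intros f.
  - rewrite rsum_Sl. simpl. unfold rsum; simpl. lra.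
  - rewrite rsum_Sl, IHN, rsum_Sl. lra.
Qed.

Lemma rsum_ext N f g : (forall i, (i < N)%nat -> f i = g i) -> rsum N f = rsum N g.
Proof. induction N; intros H; auto. rewrite !rsum_S, IHN by (intros; apply H; lia). rewrite H by lia. auto. Qed.

Lemma rsum_plus N f g : rsum N (fun i => f i + g i) = rsum N f + rsum N g.
Proof. induction N; [unfold rsum; simpl; lra|]. rewrite !rsum_S, IHN. lra. Qed.

Lemma rsum_scal N c f : rsum N (fun i => c * f i) = c * rsum N f.
Proof. induction N; [unfold rsum; simpl; lra|]. rewrite !rsum_S, IHN. lra. Qed.

Lemma rsum_const0 N : rsum N (fun _ => 0) = 0.
Proof. induction N; [reflexivity|]. rewrite rsum_S, IHN; lra. Qed.

Lemma rsum_const N c : rsum N (fun _ => c) = INR N * c.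
Proof. induction N; [unfold rsum; simpl; lra|]. rewrite rsum_S, IHN, S_INR; lra. Qed.

Lemma rsum_le N f g : (forall i, (i < N)%nat -> f i <= g i) -> rsum N f <= rsum N g.
Proof. induction N; intros H; [unfold rsum; simpl; lra|]. rewrite !rsum_S.
  assert (f N <= g N) by (apply H; lia). assert (rsum N f <= rsum N g) by (apply IHN; intros; apply H; lia). lra. Qed.

Lemma rsum_nonneg N f : (forall i, (i < N)%nat -> 0 <= f i) -> 0 <= rsum N f.
Proof. intros H. rewrite <- (rsum_const0 N). apply rsum_le; auto. Qed.

Lemma rsum_abs N f : Rabs (rsum N f) <= rsum N (fun i => Rabs (f i)).
Proof. induction N; [unfold rsum; simpl; rewrite Rabs_R0; lra|]. rewrite !rsum_S.
  eapply Rle_trans; [apply Rabs_triang|]. lra. Qed.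

Lemma rsum_add a c f : rsum (a + c) f = rsum a f + rsum c (fun i => f (a + i)%nat).
Proof. induction c; [rewrite Nat.add_0_r, rsum_0; lra|].
  rewrite Nat.add_succ_r, !rsum_S, IHc. lra. Qed.

Lemma rsum_mul a c f : rsum (a * c) f = rsum a (fun q => rsum c (fun r => f (q * c + r)%nat)).
Proof. induction a; [reflexivity|]. rewrite rsum_S, <- IHa.
  replace (S a * c)%nat with (a * c + c)%nat by lia. rewrite rsum_add. f_equal; try (apply rsum_ext; intros; f_equal; lia).
  Qed.

Lemma rsum_swap A B f : rsum A (fun i => rsum B (fun j => f i j)) = rsum B (fun j => rsum A (fun i => f i j)).
Proof. induction A.
  - unfold rsum at 1; simpl. rewrite <- (rsum_const0 B). apply rsum_ext. reflexivity.
  - rewrite rsum_S, IHA. rewrite <- rsum_plus. apply rsum_ext; intros. rewrite rsum_S. auto. Qed.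

Lemma rsum_split a M f : (a <= M)%nat ->
  rsum M f = rsum a f + rsum M (fun n => if (a <=? n)%nat then f n else 0).
Proof. intros H. induction M.
  - assert (a = 0)%nat by lia. subst. unfold rsum; simpl; lra.
  - destruct (Nat.eq_dec a (S M)).
    + subst. rewrite (rsum_ext _ (fun n => if (S M <=? n)%nat then f n else 0) (fun _ => 0)). rewrite rsum_const0; lra.
      intros i Hi. destruct (Nat.leb_spec (S M) i); [lia|reflexivity].
    + rewrite !rsum_S, IHM by lia. destruct (Nat.leb_spec a M); [lra|lia]. Qed.

Lemma sum_n_rsum (a : nat -> R) n : sum_n a n = rsum (S n) a.
Proof. induction n. rewrite sum_O. unfold rsum; simpl. lra.
  rewrite sum_Sn, IHn, (rsum_S (S n)). reflexivity. Qed.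

Lemma is_series_rsum (a : nat -> R) (L : R) : is_lim_seq (fun n => rsum n a) L <-> is_series a L.
Proof. split; intros H.
  - apply is_lim_seq_incr_1 in H. apply (is_lim_seq_ext _ (sum_n a)) in H.
    exact H. intros; rewrite sum_n_rsum; auto.
  - apply is_lim_seq_incr_1. apply (is_lim_seq_ext (sum_n a)). intros; rewrite sum_n_rsum; auto.
    exact H. Qed.

Lemma kdig_aux_fuel b d : (2 <= b)%nat -> forall f1 f2 n, (n <= f1)%nat -> (n <= f2)%nat ->
  kdig_aux b d f1 n = kdig_aux b d f2 n.
Proof. intros Hb. induction f1; intros f2 n H1 H2.
  - assert (n = 0)%nat by lia. subst. destruct f2; reflexivity.
  - destruct f2. assert (n = 0)%nat by lia. subst. reflexivity.
    simpl. destruct (Nat.eqb_spec n 0); auto.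
    assert (n / b < n)%nat by (apply Nat.div_lt; lia).
    rewrite (IHf1 f2); auto; lia. Qed.

Lemma kdig_step b d n : (2 <= b)%nat -> (1 <= n)%nat ->
  kdig b d n = ((if Nat.eqb (n mod b) d then 1 else 0) + kdig b d (n / b))%nat.
Proof. intros Hb Hn. unfold kdig. destruct n; [lia|]. simpl kdig_aux at 1.
  f_equal. apply kdig_aux_fuel; auto.
  assert (S n / b < S n)%nat by (apply Nat.div_lt; lia). lia. Qed.

Lemma kdig_concat b d : (2 <= b)%nat -> forall j N X, (1 <= N)%nat -> (X < b ^ j)%nat ->
  kdig b d (N * b ^ j + X) = (kdig b d N + cnt_len b d j X)%nat.
Proof. intros Hb. induction j; intros N X HN HX.
  - simpl in HX. assert (X = 0)%nat by lia. subst. rewrite Nat.pow_0_r, Nat.mul_1_r. simpl cnt_len. rewrite !Nat.add_0_r. reflexivity.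
  - assert (0 < b ^ S j)%nat by (apply Nat.neq_0_lt_0, Nat.pow_nonzero; lia).
    rewrite kdig_step by nia.
    assert (E : (N * b ^ S j + X = (N * b ^ j + X / b) * b + X mod b)%nat).
    { pose proof (Nat.div_mod X b ltac:(lia)). simpl. nia. }
    rewrite E. assert (Hr : (X mod b < b)%nat) by (apply Nat.mod_upper_bound; lia).
    set (Y := (N * b ^ j + X / b)%nat). set (r := (X mod b)).
    assert (E1 : ((Y * b + r) mod b = r)%nat).
    { rewrite Nat.add_comm, Nat.Div0.mod_add. apply Nat.mod_small; auto. }
    assert (E2 : ((Y * b + r) / b = Y)%nat).
    { rewrite Nat.div_add_l by lia. rewrite Nat.div_small by auto. lia. }
    rewrite E1, E2. unfold Y. rewrite IHj; auto.
    + simpl cnt_len. fold r. lia.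
    + apply Nat.Div0.div_lt_upper_bound. simpl in HX. lia. Qed.

Lemma cnt_len_step b d l q r : (2 <= b)%nat -> (r < b)%nat ->
  cnt_len b d (S l) (q * b + r) = ((if Nat.eqb r d then 1 else 0) + cnt_len b d l q)%nat.
Proof. intros Hb Hr. cbn [cnt_len].
  assert (E1 : ((q * b + r) mod b = r)%nat).
  { rewrite Nat.add_comm, Nat.Div0.mod_add. apply Nat.mod_small; auto. }
  assert (E2 : ((q * b + r) / b = q)%nat).
  { rewrite Nat.div_add_l by lia. rewrite Nat.div_small by auto. lia. }
  rewrite E1, E2. reflexivity. Qed.

Definition mt (b d k : nat) (g : R -> R) (l : nat) : R :=
  rsum (b ^ l) (fun x => if Nat.eqb (cnt_len b d l x) k
                         then / INR (b ^ l) * g (INR x / INR (b ^ l)) else 0).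

Lemma mu_integral_mt b d k g : mu_integral b d k g = Series (mt b d k g).
Proof. reflexivity. Qed.

Lemma rsum_digit b d (al be : R) : (d < b)%nat ->
  rsum b (fun r => if Nat.eqb r d then al else be) = al + (INR b - 1) * be.
Proof. induction b; intros H; [lia|]. rewrite rsum_S, S_INR.
  destruct (Nat.eq_dec d b).
  - subst. rewrite Nat.eqb_refl. rewrite (rsum_ext _ _ (fun _ => be)).
    rewrite rsum_const. lra. intros i Hi. destruct (Nat.eqb_spec i b); [lia|auto].
  - rewrite IHb by lia. destruct (Nat.eqb_spec b d); [lia|]. lra. Qed.

Lemma INR_pow_pos b l : (2 <= b)%nat -> 0 < INR (b ^ l).
Proof. intros. apply lt_0_INR. apply Nat.neq_0_lt_0, Nat.pow_nonzero; lia. Qed.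

Lemma mass_rec b d k l : (2 <= b)%nat -> (d < b)%nat ->
  mt b d k (fun _ => 1) (S l) =
  (INR b - 1) / INR b * mt b d k (fun _ => 1) l
  + / INR b * (match k with O => 0 | S k' => mt b d k' (fun _ => 1) l end).
Proof. intros Hb Hd. unfold mt.
  rewrite (Nat.pow_succ_r' b l), (Nat.mul_comm b (b ^ l)), rsum_mul.
  assert (HB : 0 < INR (b ^ l)) by (apply INR_pow_pos; auto).
  assert (Hb' : 2 <= INR b) by (apply (le_INR 2); auto).
  rewrite mult_INR.
  set (B := INR (b ^ l)). assert (HB2 : 0 < B) by exact HB. clearbody B.
  rewrite (rsum_ext _ _ (fun q => (if Nat.eqb (cnt_len b d l q + 1) k then / (B * INR b) else 0)
       + (INR b - 1) * (if Nat.eqb (cnt_len b d l q) k then / (B * INR b) else 0))).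
  2:{ intros q Hq. rewrite <- (rsum_digit b d) by auto. apply rsum_ext. intros r Hr.
      rewrite cnt_len_step by auto. destruct (Nat.eqb_spec r d).
      - rewrite Nat.add_comm. simpl. rewrite Rmult_1_r. auto.
      - simpl. rewrite Rmult_1_r. auto. }
  destruct k as [|k'].
  - rewrite Rmult_0_r, Rplus_0_r. rewrite <- rsum_scal. apply rsum_ext. intros q _.
    destruct (Nat.eqb_spec (cnt_len b d l q + 1) 0); [lia|].
    destruct (Nat.eqb_spec (cnt_len b d l q) 0). { rewrite Rmult_1_r. field. split; lra. } ring.
  - rewrite <- !rsum_scal, <- rsum_plus. apply rsum_ext. intros q _.
    destruct (Nat.eqb_spec (cnt_len b d l q + 1) (S k'));
    destruct (Nat.eqb_spec (cnt_len b d l q) (S k'));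
    destruct (Nat.eqb_spec (cnt_len b d l q) k'); try lia; try ring; rewrite ?Rmult_1_r; field; lra. Qed.

Lemma mass0 b d k : mt b d k (fun _ => 1) 0 = if Nat.eqb k 0 then 1 else 0.
Proof. unfold mt. simpl. rewrite rsum_S, rsum_0. simpl.
  destruct k; simpl; lra. Qed.

Lemma mass_nonneg b d k l : (2 <= b)%nat -> 0 <= mt b d k (fun _ => 1) l.
Proof. intros Hb. unfold mt. apply rsum_nonneg. intros i _. destruct (_ =? _)%nat; [|lra].
  rewrite Rmult_1_r. left. apply Rinv_0_lt_compat, INR_pow_pos; auto. Qed.

Lemma mass_psum_bound b d : (2 <= b)%nat -> (d < b)%nat -> forall L k,
  rsum L (mt b d k (fun _ => 1)) <= INR b.
Proof. intros Hb Hd. assert (Hb' : 2 <= INR b) by (apply (le_INR 2); auto).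
  induction L; intros k. rewrite rsum_0; lra.
  rewrite rsum_Sl. rewrite (rsum_ext _ _ (fun l => (INR b - 1) / INR b * mt b d k (fun _ => 1) l
  + / INR b * (match k with O => 0 | S k' => mt b d k' (fun _ => 1) l end))).
  2:{ intros; apply mass_rec; auto. }
  rewrite rsum_plus, !rsum_scal, mass0. destruct k as [|k'].
  - simpl. rewrite rsum_const0. specialize (IHL 0%nat).
    assert ((INR b - 1) / INR b * rsum L (mt b d 0 (fun _ => 1)) <= (INR b - 1) / INR b * INR b).
    { apply Rmult_le_compat_l; auto. apply Rdiv_le_0_compat; lra. }
    replace ((INR b - 1) / INR b * INR b) with (INR b - 1) in H by (field; lra). lra.
  - simpl. specialize (IHL (S k')) as H1. specialize (IHL k') as H2.
    assert ((INR b - 1) / INR b * rsum L (mt b d (S k') (fun _ => 1)) <= (INR b - 1) / INR b * INR b).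
    { apply Rmult_le_compat_l; auto. apply Rdiv_le_0_compat; lra. }
    assert (/ INR b * rsum L (mt b d k' (fun _ => 1)) <= / INR b * INR b).
    { apply Rmult_le_compat_l; auto. left; apply Rinv_0_lt_compat; lra. }
    replace ((INR b - 1) / INR b * INR b) with (INR b - 1) in H by (field; lra).
    replace (/ INR b * INR b) with 1 in H0 by (field; lra). change (fun i : nat => mt b d k' (fun _ : R => 1) i) with (mt b d k' (fun _ : R => 1)). lra. Qed.

Lemma psum_rec b d k L : (2 <= b)%nat -> (d < b)%nat ->
  rsum (S L) (mt b d k (fun _ => 1)) =
  (if Nat.eqb k 0 then 1 else 0) + (INR b - 1) / INR b * rsum L (mt b d k (fun _ => 1))
  + / INR b * (match k with O => 0 | S k' => rsum L (mt b d k' (fun _ => 1)) end).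
Proof. intros Hb Hd. rewrite rsum_Sl, mass0.
  rewrite (rsum_ext _ _ (fun l => (INR b - 1) / INR b * mt b d k (fun _ => 1) l
  + / INR b * (match k with O => 0 | S k' => mt b d k' (fun _ => 1) l end))).
  2:{ intros; apply mass_rec; auto. }
  rewrite rsum_plus, !rsum_scal. destruct k; [rewrite rsum_const0|]; rewrite Rplus_assoc; reflexivity. Qed.

Lemma lim_uniq (u : nat -> R) (a c : R) : is_lim_seq u a -> is_lim_seq u c -> a = c.
Proof. intros H1 H2. apply is_lim_seq_unique in H1. apply is_lim_seq_unique in H2.
  rewrite H1 in H2. injection H2; auto. Qed.

Lemma mass_series b d : (2 <= b)%nat -> (d < b)%nat -> forall k,
  is_series (mt b d k (fun _ => 1)) (INR b).
Proof. intros Hb Hd. assert (Hb' : 2 <= INR b) by (apply (le_INR 2); auto).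
  induction k.
  - apply is_series_rsum.
    destruct (ex_finite_lim_seq_incr (fun L => rsum L (mt b d 0 (fun _ => 1))) (INR b)) as [T HT].
    { intros n. rewrite rsum_S. pose proof (mass_nonneg b d 0 n Hb). lra. }
    { intros; apply mass_psum_bound; auto. }
    assert (HT2 := HT). apply is_lim_seq_incr_1 in HT2.
    apply (is_lim_seq_ext _ _ _ (fun L => psum_rec b d 0 L Hb Hd)) in HT2.
    assert (H3 : is_lim_seq (fun L => (if Nat.eqb 0 0 then 1 else 0) + (INR b - 1) / INR b * rsum L (mt b d 0 (fun _ => 1))
      + / INR b * 0) (1 + (INR b - 1) / INR b * T + / INR b * 0)).
    { apply is_lim_seq_plus'. apply is_lim_seq_plus'. apply is_lim_seq_const.
      apply (is_lim_seq_scal_l _ _ T HT). apply is_lim_seq_const. }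
    pose proof (lim_uniq _ _ _ HT2 H3). replace (INR b) with T; auto.
    assert (T * INR b = INR b + (INR b - 1) * T). { rewrite H at 1. field. lra. } nra.
  - apply is_series_rsum in IHk. apply is_series_rsum.
    destruct (ex_finite_lim_seq_incr (fun L => rsum L (mt b d (S k) (fun _ => 1))) (INR b)) as [T HT].
    { intros n. rewrite rsum_S. pose proof (mass_nonneg b d (S k) n Hb). lra. }
    { intros; apply mass_psum_bound; auto. }
    assert (HT2 := HT). apply is_lim_seq_incr_1 in HT2.
    apply (is_lim_seq_ext _ _ _ (fun L => psum_rec b d (S k) L Hb Hd)) in HT2.
    assert (H3 : is_lim_seq (fun L => (if Nat.eqb (S k) 0 then 1 else 0) + (INR b - 1) / INR b * rsum L (mt b d (S k) (fun _ => 1))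
      + / INR b * rsum L (mt b d k (fun _ => 1))) (0 + (INR b - 1) / INR b * T + / INR b * INR b)).
    { apply is_lim_seq_plus'. apply is_lim_seq_plus'. apply is_lim_seq_const.
      apply (is_lim_seq_scal_l _ _ T HT). apply (is_lim_seq_scal_l _ _ (INR b) IHk). }
    pose proof (lim_uniq _ _ _ HT2 H3). replace (INR b) with T; auto.
    change (if Nat.eqb (S k) 0 then 1 else 0) with 0 in H.
    assert (T * INR b = INR b + (INR b - 1) * T). { rewrite H at 1. field. lra. } nra. Qed.

Lemma is_series_plusR (a c : nat -> R) la lc : is_series a la -> is_series c lc ->
  is_series (fun n => a n + c n) (la + lc).
Proof. intros H1 H2. apply is_series_rsum. apply is_series_rsum in H1. apply is_series_rsum in H2.
  apply (is_lim_seq_ext (fun n => rsum n a + rsum n c)). intros; rewrite rsum_plus; auto.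
  apply is_lim_seq_plus'; auto. Qed.

Lemma is_series_scalR (c : R) (a : nat -> R) la : is_series a la ->
  is_series (fun n => c * a n) (c * la).
Proof. intros H1. apply is_series_rsum. apply is_series_rsum in H1.
  apply (is_lim_seq_ext (fun n => c * rsum n a)). intros; rewrite rsum_scal; auto.
  apply (is_lim_seq_scal_l _ c la); auto. Qed.

Lemma mt_plus b d k g h l : mt b d k (fun x => g x + h x) l = mt b d k g l + mt b d k h l.
Proof. unfold mt. rewrite <- rsum_plus. apply rsum_ext. intros. destruct (_ =? _)%nat; ring. Qed.

Lemma mt_scal b d k c g l : mt b d k (fun x => c * g x) l = c * mt b d k g l.
Proof. unfold mt. rewrite <- rsum_scal. apply rsum_ext. intros. destruct (_ =? _)%nat; ring. Qed.

Lemma mt_const b d k c l : mt b d k (fun _ => c) l = c * mt b d k (fun _ => 1) l.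
Proof. rewrite <- mt_scal. unfold mt. apply rsum_ext. intros. destruct (_ =? _)%nat; ring. Qed.

Lemma x_range b l x : (2 <= b)%nat -> (x < b ^ l)%nat -> 0 <= INR x / INR (b ^ l) <= 1.
Proof. intros Hb Hx. pose proof (INR_pow_pos b l Hb). apply lt_INR in Hx. pose proof (pos_INR x).
  split. apply Rdiv_le_0_compat; lra.
  assert (INR x / INR (b ^ l) <= INR (b ^ l) / INR (b ^ l)).
  { unfold Rdiv. apply Rmult_le_compat_r; [left; apply Rinv_0_lt_compat|]; lra. }
  replace (INR (b ^ l) / INR (b ^ l)) with 1 in H1 by (field; lra). lra. Qed.

Lemma mt_ext b d k g h l : (2 <= b)%nat -> (forall x, 0 <= x <= 1 -> g x = h x) ->
  mt b d k g l = mt b d k h l.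
Proof. intros Hb H. unfold mt. apply rsum_ext. intros x Hx. rewrite H; auto. apply x_range; auto. Qed.

Lemma mt_abs_le b d k g h l : (2 <= b)%nat -> (forall x, 0 <= x <= 1 -> Rabs (g x) <= h x) ->
  Rabs (mt b d k g l) <= mt b d k h l.
Proof. intros Hb H. unfold mt. eapply Rle_trans; [apply rsum_abs|]. apply rsum_le. intros x Hx.
  pose proof (INR_pow_pos b l Hb). destruct (_ =? _)%nat; [|rewrite Rabs_R0; lra].
  rewrite Rabs_mult, Rabs_inv, (Rabs_right (INR (b ^ l))) by lra.
  apply Rmult_le_compat_l. left; apply Rinv_0_lt_compat; lra. apply H, x_range; auto. Qed.

Lemma mt_le b d k g h l : (2 <= b)%nat -> (forall x, 0 <= x <= 1 -> g x <= h x) ->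
  mt b d k g l <= mt b d k h l.
Proof. intros Hb H. unfold mt. apply rsum_le. intros x Hx.
  pose proof (INR_pow_pos b l Hb). destruct (_ =? _)%nat; [|lra].
  apply Rmult_le_compat_l. left; apply Rinv_0_lt_compat; lra. apply H, x_range; auto. Qed.

Lemma mu_is_plus b d k g h a c : is_series (mt b d k g) a -> is_series (mt b d k h) c ->
  is_series (mt b d k (fun x => g x + h x)) (a + c).
Proof. intros H1 H2. apply (is_series_ext (fun n => mt b d k g n + mt b d k h n)).
  intros; rewrite mt_plus; reflexivity. apply (is_series_plusR _ _ _ _ H1 H2). Qed.

Lemma mu_is_scal b d k c g a : is_series (mt b d k g) a ->
  is_series (mt b d k (fun x => c * g x)) (c * a).
Proof. intros H1. apply (is_series_ext (fun n => c * mt b d k g n)).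
  intros; rewrite mt_scal; reflexivity. apply (is_series_scalR _ _ _ H1). Qed.

Lemma mu_is_const b d k c : (2 <= b)%nat -> (d < b)%nat -> is_series (mt b d k (fun _ => c)) (c * INR b).
Proof. intros Hb Hd. apply (is_series_ext (fun n => c * mt b d k (fun _ => 1) n)).
  intros; symmetry; apply mt_const.
  apply is_series_scalR. apply mass_series; auto. Qed.

Lemma mu_dom b d k g h : (2 <= b)%nat -> (forall x, 0 <= x <= 1 -> Rabs (g x) <= h x) ->
  ex_series (mt b d k h) -> ex_series (mt b d k g) /\ Rabs (Series (mt b d k g)) <= Series (mt b d k h).
Proof. intros Hb H Hh.
  assert (Hg : ex_series (mt b d k g)).
  { apply (@ex_series_le R_AbsRing R_CompleteNormedModule _ (mt b d k h)); auto. intros n. apply mt_abs_le; auto. }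
  split; auto.
  eapply Rle_trans. apply Series_Rabs.
  apply (@ex_series_le R_AbsRing R_CompleteNormedModule _ (mt b d k h)); auto. intros n. change (norm (Rabs (mt b d k g n))) with (Rabs (Rabs (mt b d k g n))).
  rewrite Rabs_Rabsolu. apply mt_abs_le; auto.
  apply Series_le; auto. intros n. split. apply Rabs_pos. apply mt_abs_le; auto. Qed.

Lemma mu_ex_bound b d k g C : (2 <= b)%nat -> (d < b)%nat -> (forall x, 0 <= x <= 1 -> Rabs (g x) <= C) ->
  ex_series (mt b d k g).
Proof. intros Hb Hd H. apply (mu_dom b d k g (fun _ => C)); auto. eexists. apply mu_is_const; auto. Qed.

Lemma mu_is_bound b d k g C : (2 <= b)%nat -> (d < b)%nat -> (forall x, 0 <= x <= 1 -> Rabs (g x) <= C) ->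
  is_series (mt b d k g) (mu_integral b d k g).
Proof. intros. apply Series_correct. eapply mu_ex_bound; eauto. Qed.

Lemma x_range2 b l x : (2 <= b)%nat -> (x < b ^ l)%nat -> INR x / INR (b ^ l) <= 1 - / INR (b ^ l).
Proof. intros Hb Hx. pose proof (INR_pow_pos b l Hb).
  assert (INR x <= INR (b ^ l) - 1). { assert (S x <= b ^ l)%nat by lia. apply le_INR in H0. rewrite S_INR in H0. lra. }
  replace (1 - / INR (b ^ l)) with ((INR (b ^ l) - 1) / INR (b ^ l)) by (field; lra).
  unfold Rdiv. apply Rmult_le_compat_r; [left; apply Rinv_0_lt_compat|]; lra. Qed.

Lemma mt_le_strong b d k g h l : (2 <= b)%nat -> (forall x, 0 <= x <= 1 - / INR (b ^ l) -> g x <= h x) ->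
  mt b d k g l <= mt b d k h l.
Proof. intros Hb H. unfold mt. apply rsum_le. intros x Hx.
  pose proof (INR_pow_pos b l Hb). destruct (_ =? _)%nat; [|lra].
  apply Rmult_le_compat_l. left; apply Rinv_0_lt_compat; lra. apply H. split.
  apply x_range; auto. apply x_range2; auto. Qed.

Lemma tail_bound (a m : nat -> R) (c T : R) L :
  (forall l, 0 <= a l <= m l) -> (forall l, (l < L)%nat -> a l <= c * m l) ->
  (forall K, rsum K m <= T) -> forall K, rsum K a <= c * rsum L m + (T - rsum L m).
Proof. intros H1 H2 H3 K.
  assert (HL : rsum L a <= c * rsum L m). { rewrite <- rsum_scal. apply rsum_le; auto. }
  destruct (Nat.le_gt_cases L K).
  - rewrite (rsum_split L K a) by auto. specialize (H3 K).
    rewrite (rsum_split L K m) in H3 by auto.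
    assert (rsum K (fun n => if (L <=? n)%nat then a n else 0) <= rsum K (fun n => if (L <=? n)%nat then m n else 0)).
    { apply rsum_le. intros i _. destruct (L <=? i)%nat; [apply H1|lra]. }
    lra.
  - assert (rsum K a <= rsum L a).
    { rewrite (rsum_split K L a) by lia. assert (0 <= rsum L (fun n => if (K <=? n)%nat then a n else 0)).
      apply rsum_nonneg. intros i _. destruct (K <=? i)%nat; [apply H1|lra]. lra. }
    assert (rsum L m <= T) by auto. lra. Qed.

Lemma series_le_const (a : nat -> R) (C : R) : ex_series a -> (forall K, rsum K a <= C) -> Series a <= C.
Proof. intros Ha H. apply Series_correct, is_series_rsum in Ha.
  pose proof (is_lim_seq_le _ _ _ _ H Ha (is_lim_seq_const C)). simpl in H0. auto. Qed.

Lemma series_ge_0 (a : nat -> R) : ex_series a -> (forall K, 0 <= rsum K a) -> 0 <= Series a.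
Proof. intros Ha H. apply Series_correct, is_series_rsum in Ha.
  pose proof (is_lim_seq_le _ _ _ _ H (is_lim_seq_const 0) Ha). simpl in H0. auto. Qed.

Lemma pow_le1 x M : 0 <= x <= 1 -> x ^ M <= 1.
Proof. intros. rewrite <- (pow1 M). apply pow_incr. lra. Qed.

Lemma moment_decay b d k : (2 <= b)%nat -> (d < b)%nat ->
  is_lim_seq (fun M => mu_integral b d k (fun x => x ^ M)) 0.
Proof. intros Hb Hd. assert (Hb' : 2 <= INR b) by (apply (le_INR 2); auto).
  pose proof (mass_series b d Hb Hd k) as HM. assert (HM2 := HM). apply is_series_rsum in HM2.
  assert (Hbd : forall K, rsum K (mt b d k (fun _ => 1)) <= INR b) by (intros; apply mass_psum_bound; auto).
  assert (Hpos : forall K, 0 <= rsum K (mt b d k (fun _ => 1))) by (intros; apply rsum_nonneg; intros; apply mass_nonneg; auto).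
  apply is_lim_seq_spec. intros eps.
  apply is_lim_seq_spec in HM2. destruct (HM2 (pos_div_2 eps)) as [L HL]. specialize (HL L (Nat.le_refl _)).
  simpl in HL. rewrite Rabs_left1 in HL by (specialize (Hbd L); lra).
  set (q := 1 - / INR (b ^ L)).
  assert (Hq : 0 <= q < 1). { pose proof (INR_pow_pos b L Hb).
    assert (1 <= INR (b ^ L)). { apply (le_INR 1). apply Nat.neq_0_lt_0, Nat.pow_nonzero; lia. }
    unfold q. split. assert (/ INR (b ^ L) <= 1). { rewrite <- Rinv_1. apply Rinv_le_contravar; lra. } lra.
    assert (0 < / INR (b ^ L)) by (apply Rinv_0_lt_compat; lra). lra. }
  assert (Hg := is_lim_seq_geom q ltac:(rewrite Rabs_right; lra)).
  apply is_lim_seq_spec in Hg. destruct (Hg (mkposreal (eps / 2 / INR b) ltac:(apply Rdiv_lt_0_compat; [apply (cond_pos (pos_div_2 eps))|lra]))) as [M0 HM0].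
  exists M0. intros M HMM. specialize (HM0 M HMM). simpl in HM0. rewrite Rminus_0_r, Rabs_right in HM0 by (apply Rle_ge, pow_le; lra).
  assert (Hex : ex_series (mt b d k (fun x => x ^ M))).
  { apply (mu_ex_bound b d k _ 1); auto. intros x Hx. rewrite <- RPow_abs. rewrite (Rabs_right x) by lra. apply pow_le1; lra. }
  assert (Ha : forall l, 0 <= mt b d k (fun x => x ^ M) l <= mt b d k (fun _ => 1) l).
  { intros l. split.
    - replace 0 with (mt b d k (fun _ => 0) l). apply mt_le; auto. intros; apply pow_le; lra.
      rewrite mt_const; ring.
    - apply mt_le; auto. intros; apply pow_le1; lra. }
  assert (Hb2 : forall l, (l < L)%nat -> mt b d k (fun x => x ^ M) l <= q ^ M * mt b d k (fun _ => 1) l).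
  { intros l Hl. rewrite <- mt_scal. apply mt_le_strong; auto. intros x Hx. rewrite Rmult_1_r.
    apply pow_incr. split; try lra. unfold q.
    assert (INR (b ^ l) <= INR (b ^ L)) by (apply le_INR, Nat.pow_le_mono_r; lia).
    pose proof (INR_pow_pos b l Hb).
    assert (/ INR (b ^ L) <= / INR (b ^ l)) by (apply Rinv_le_contravar; lra). lra. }
  pose proof (tail_bound _ _ (q ^ M) (INR b) L Ha Hb2 Hbd) as TB.
  pose proof (series_le_const _ _ Hex TB) as S1.
  assert (S0 : 0 <= Series (mt b d k (fun x => x ^ M))).
  { apply series_ge_0; auto. intros; apply rsum_nonneg; intros; apply Ha. }
  unfold mu_integral. change (Series (fun l : nat => rsum (b ^ l) (fun x : nat => if cnt_len b d l x =? k then / INR (b ^ l) * (INR x / INR (b ^ l)) ^ M else 0))) with (Series (mt b d k (fun x => x ^ M))).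
  rewrite Rminus_0_r, Rabs_right by lra.
  assert (q ^ M * rsum L (mt b d k (fun _ => 1)) <= q ^ M * INR b).
  { apply Rmult_le_compat_l; auto. apply pow_le; lra. }
  assert (q ^ M * INR b < eps / 2).
  { apply (Rmult_lt_compat_r (INR b)) in HM0; [|lra]. replace (eps / 2 / INR b * INR b) with (eps / 2) in HM0 by (field; lra). lra. }
  simpl in HL. lra. Qed.

Lemma geom_id (y c : R) K : c <> 0 -> c - y <> 0 ->
  rsum K (fun m => y ^ (S m) / c ^ (S m + 1)) = / (c - y) - / c - (y / c) ^ (S K) / (c - y).
Proof. intros Hc Hcy. induction K.
  - rewrite rsum_0. simpl. field. auto.
  - rewrite rsum_S, IHK. unfold Rdiv. rewrite !Rpow_mult_distr, !pow_inv.
    rewrite Nat.add_1_r. assert (c ^ K <> 0) by (apply pow_nonzero; auto).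
    simpl. field. repeat split; auto. Qed.

Lemma mu_rsum b d k (c : nat -> R) (h : nat -> R -> R) : (2 <= b)%nat -> (d < b)%nat ->
  (forall m, ex_series (mt b d k (h m))) -> forall K,
  is_series (mt b d k (fun x => rsum K (fun m => c m * h m x)))
            (rsum K (fun m => c m * mu_integral b d k (h m))).
Proof. intros Hb Hd Hh K. induction K.
  - rewrite rsum_0. apply (is_series_ext (mt b d k (fun _ => 0))).
    intros; reflexivity. assert (H0 := mu_is_const b d k 0 Hb Hd). rewrite Rmult_0_l in H0. exact H0.
  - rewrite rsum_S. apply (is_series_ext (mt b d k (fun x => rsum K (fun m => c m * h m x) + c K * h K x))).
    intros l. apply mt_ext; auto. intros; rewrite rsum_S; auto.
    apply mu_is_plus; auto. apply mu_is_scal. apply Series_correct. auto. Qed.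

Lemma mu_lim_series b d k (c : nat -> R) (h : nat -> R -> R) (F : R -> R) (E : nat -> R -> R) :
  (2 <= b)%nat -> (d < b)%nat ->
  (forall m, ex_series (mt b d k (h m))) -> ex_series (mt b d k F) ->
  (forall K, ex_series (mt b d k (E K))) ->
  is_lim_seq (fun K => mu_integral b d k (E K)) 0 ->
  (forall K x, 0 <= x <= 1 -> Rabs (rsum K (fun m => c m * h m x) - F x) <= E K x) ->
  is_series (fun m => c m * mu_integral b d k (h m)) (mu_integral b d k F).
Proof. intros Hb Hd Hh HF HE HE0 Hbd. apply is_series_rsum.
  assert (Hdiff : forall K, Rabs (rsum K (fun m => c m * mu_integral b d k (h m)) - mu_integral b d k F)
                        <= mu_integral b d k (E K)).
  { intros K. pose proof (mu_rsum b d k c h Hb Hd Hh K) as HK.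
    assert (HD : is_series (mt b d k (fun x => rsum K (fun m => c m * h m x) + (-1) * F x))
               (rsum K (fun m => c m * mu_integral b d k (h m)) + (-1) * mu_integral b d k F)).
    { apply mu_is_plus; auto. apply mu_is_scal. apply Series_correct; auto. }
    destruct (mu_dom b d k (fun x => rsum K (fun m => c m * h m x) + (-1) * F x) (E K) Hb) as [_ H2]; auto.
    intros x Hx. replace (rsum K (fun m => c m * h m x) + (-1) * F x) with (rsum K (fun m => c m * h m x) - F x) by ring. auto.
    rewrite (is_series_unique _ _ HD) in H2.
    replace (rsum K (fun m => c m * mu_integral b d k (h m)) - mu_integral b d k F) with
      (rsum K (fun m => c m * mu_integral b d k (h m)) + -1 * mu_integral b d k F) by ring. exact H2. }
  apply is_lim_seq_spec. intros eps. apply is_lim_seq_spec in HE0. destruct (HE0 eps) as [N HN].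
  exists N. intros n Hn. specialize (HN n Hn). specialize (Hdiff n). simpl in HN.
  rewrite Rminus_0_r in HN. pose proof (Rle_abs (mu_integral b d k (E n))). lra. Qed.

Lemma is_series_extR (a c : nat -> R) (L : R) : (forall n, a n = c n) -> is_series a L -> is_series c L.
Proof. intros H. apply is_series_ext; auto. Qed.

Lemma inv_bound1 N x : 1 <= N -> 0 <= x -> 0 < / (N + x) <= 1.
Proof. intros. split. apply Rinv_0_lt_compat; lra. rewrite <- Rinv_1. apply Rinv_le_contravar; lra. Qed.

Lemma mu_g_ex b d k N : (2 <= b)%nat -> (d < b)%nat -> 1 <= N ->
  ex_series (mt b d k (fun x => / (N + x))).
Proof. intros. apply (mu_ex_bound b d k _ 1); auto. intros x Hx.
  pose proof (inv_bound1 N x H1 ltac:(lra)). rewrite Rabs_right; lra. Qed.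

Lemma mu_F_val b d k N c : (2 <= b)%nat -> (d < b)%nat -> 1 <= N ->
  is_series (mt b d k (fun x => / (N + x) + (-1) * c)) (mu_integral b d k (fun x => / (N + x)) - c * INR b).
Proof. intros. replace (mu_integral b d k (fun x => / (N + x)) - c * INR b) with
   (mu_integral b d k (fun x => / (N + x)) + (-1) * (c * INR b)) by ring.
  apply mu_is_plus. apply Series_correct, mu_g_ex; auto. apply mu_is_scal, mu_is_const; auto. Qed.

Lemma per_u b d k n : (2 <= b)%nat -> (d < b)%nat -> (1 <= n)%nat ->
  is_series (fun m => (-1) ^ (S m) * (u_mom b d k (S m) / INR n ^ (S m + 1)))
            (mu_integral b d k (fun x => / (INR n + x)) - INR b / INR n).
Proof. intros Hb Hd Hn. assert (HN : 1 <= INR n) by (apply (le_INR 1); auto).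
  set (N := INR n) in *.
  apply (is_series_extR (fun m => ((-1) ^ (S m) / N ^ (S m + 1)) * mu_integral b d k (fun x => x ^ (S m)))).
  { intros m. unfold u_mom. unfold Rdiv. ring. }
  replace (mu_integral b d k (fun x => / (N + x)) - INR b / N) with
    (mu_integral b d k (fun x => / (N + x) + (-1) * / N)).
  2:{ apply is_series_unique. replace (mu_integral b d k (fun x => / (N + x)) - INR b / N) with
      (mu_integral b d k (fun x => / (N + x)) - / N * INR b) by (unfold Rdiv; ring). apply mu_F_val; auto. }
  apply (mu_lim_series b d k _ _ _ (fun K x => x ^ (S K))); auto.
  - intros m. apply (mu_ex_bound b d k _ 1); auto. intros x Hx. rewrite <- RPow_abs, Rabs_right by lra. apply pow_le1; lra.
  - eexists. apply mu_F_val; auto.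
  - intros K. apply (mu_ex_bound b d k _ 1); auto. intros x Hx. rewrite <- RPow_abs, Rabs_right by lra. apply pow_le1; lra.
  - apply (is_lim_seq_incr_1 (fun M => mu_integral b d k (fun x => x ^ M))). apply moment_decay; auto.
  - intros K x Hx.
    rewrite (rsum_ext _ _ (fun m => (- x) ^ (S m) / N ^ (S m + 1))).
    2:{ intros m _. replace (- x) with ((-1) * x) by ring. rewrite Rpow_mult_distr. unfold Rdiv; ring. }
    rewrite geom_id by lra. replace (N - - x) with (N + x) by ring.
    replace (/ (N + x) - / N - (- x / N) ^ S K / (N + x) - (/ (N + x) + -1 * / N))
      with (- ((- x / N) ^ S K * / (N + x))) by (unfold Rdiv; ring).
    rewrite Rabs_Ropp, Rabs_mult. pose proof (inv_bound1 N x HN ltac:(lra)).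
    rewrite (Rabs_right (/ (N + x))) by lra. rewrite <- RPow_abs.
    assert (Rabs (- x / N) <= x).
    { unfold Rdiv. rewrite Rabs_mult, Rabs_Ropp, Rabs_right, Rabs_inv, Rabs_right by lra.
      assert (/ N <= 1) by (rewrite <- Rinv_1; apply Rinv_le_contravar; lra).
      assert (0 < / N) by (apply Rinv_0_lt_compat; lra). nra. }
    assert (Rabs (- x / N) ^ S K <= x ^ S K) by (apply pow_incr; split; [apply Rabs_pos|auto]).
    assert (0 <= Rabs (- x / N) ^ S K) by (apply pow_le, Rabs_pos). nra. Qed.

Lemma per_v b d k n : (2 <= b)%nat -> (d < b)%nat -> (1 <= n)%nat ->
  is_series (fun m => v_mom b d k (S m) / INR (n + 1) ^ (S m + 1))
            (mu_integral b d k (fun x => / (INR n + x)) - INR b / INR (n + 1)).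
Proof. intros Hb Hd Hn. assert (HN : 1 <= INR n) by (apply (le_INR 1); auto).
  assert (HB : 2 <= INR b) by (apply (le_INR 2); auto).
  rewrite plus_INR. simpl (INR 1). set (N := INR n) in *.
  apply (is_series_extR (fun m => (/ (N + 1) ^ (S m + 1)) * mu_integral b d k (fun x => (1 - x) ^ (S m)))).
  { intros m. unfold v_mom. unfold Rdiv. ring. }
  replace (mu_integral b d k (fun x => / (N + x)) - INR b / (N + 1)) with
    (mu_integral b d k (fun x => / (N + x) + (-1) * / (N + 1))).
  2:{ apply is_series_unique. replace (mu_integral b d k (fun x => / (N + x)) - INR b / (N + 1)) with
      (mu_integral b d k (fun x => / (N + x)) - / (N + 1) * INR b) by (unfold Rdiv; ring). apply mu_F_val; auto. }
  apply (mu_lim_series b d k _ _ _ (fun K x => (/ 2) ^ (S K))); auto.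
  - intros m. apply (mu_ex_bound b d k _ 1); auto. intros x Hx. rewrite <- RPow_abs, Rabs_right by lra. apply pow_le1; lra.
  - eexists. apply mu_F_val; auto.
  - intros K. eexists. apply mu_is_const; auto.
  - apply (is_lim_seq_ext (fun K => INR b * (/ 2) ^ (S K))).
    { intros K. symmetry. rewrite Rmult_comm. apply is_series_unique. apply mu_is_const; auto. }
    replace 0 with (INR b * 0) by ring. apply (is_lim_seq_scal_l _ (INR b) 0).
    apply (is_lim_seq_incr_1 (fun K => (/ 2) ^ K)). apply is_lim_seq_geom. rewrite Rabs_right; lra.
  - intros K x Hx.
    rewrite (rsum_ext _ _ (fun m => (1 - x) ^ (S m) / (N + 1) ^ (S m + 1))).
    2:{ intros m _. unfold Rdiv; ring. }
    rewrite geom_id by lra. replace (N + 1 - (1 - x)) with (N + x) by ring.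
    replace (/ (N + x) - / (N + 1) - ((1 - x) / (N + 1)) ^ S K / (N + x) - (/ (N + x) + -1 * / (N + 1)))
      with (- (((1 - x) / (N + 1)) ^ S K * / (N + x))) by (unfold Rdiv; ring).
    rewrite Rabs_Ropp, Rabs_mult. pose proof (inv_bound1 N x HN ltac:(lra)).
    rewrite (Rabs_right (/ (N + x))) by lra. rewrite <- RPow_abs.
    assert (0 <= Rabs ((1 - x) / (N + 1)) <= / 2).
    { split. apply Rabs_pos. unfold Rdiv. rewrite Rabs_mult, Rabs_right, Rabs_inv, Rabs_right by lra.
      assert (/ (N + 1) <= / 2) by (apply Rinv_le_contravar; lra).
      assert (0 < / (N + 1)) by (apply Rinv_0_lt_compat; lra). nra. }
    assert (Rabs ((1 - x) / (N + 1)) ^ S K <= (/ 2) ^ S K) by (apply pow_incr; auto).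
    assert (0 <= Rabs ((1 - x) / (N + 1)) ^ S K) by (apply pow_le, Rabs_pos). nra. Qed.

Lemma pow_pos_nat b j : (2 <= b)%nat -> (0 < b ^ j)%nat.
Proof. intros. apply Nat.neq_0_lt_0, Nat.pow_nonzero; lia. Qed.

Lemma block_term b d k l J N : (2 <= b)%nat -> (1 <= l)%nat -> (N < b ^ l)%nat ->
  rsum (b ^ J) (fun X => if (b ^ (l - 1 + J) <=? N * b ^ J + X)%nat then Hterm b d k (N * b ^ J + X) else 0)
  = if andb (b ^ (l - 1) <=? N)%nat (kdig b d N <=? k)%nat
    then mt b d (k - kdig b d N) (fun x => / (INR N + x)) J else 0.
Proof. intros Hb Hl HN. pose proof (pow_pos_nat b J Hb) as HJ.
  rewrite Nat.pow_add_r.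
  destruct (Nat.leb_spec (b ^ (l - 1)) N) as [H1|H1]; simpl andb.
  - assert (HN1 : (1 <= N)%nat) by (pose proof (pow_pos_nat b (l - 1) Hb); lia).
    destruct (Nat.leb_spec (kdig b d N) k) as [H2|H2].
    + unfold mt. apply rsum_ext. intros X HX.
      assert (E1 : (b ^ (l - 1) * b ^ J <= N * b ^ J + X)%nat) by (pose proof (Nat.mul_le_mono_r _ _ (b ^ J) H1); lia).
      apply Nat.leb_le in E1. rewrite E1. unfold Hterm. rewrite kdig_concat by auto.
      assert (E2 : (1 <=? N * b ^ J + X)%nat = true) by (apply Nat.leb_le; nia). rewrite E2. simpl andb.
      destruct (Nat.eqb_spec (kdig b d N + cnt_len b d J X) k); destruct (Nat.eqb_spec (cnt_len b d J X) (k - kdig b d N)); try lia.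
      * rewrite plus_INR, mult_INR. pose proof (INR_pow_pos b J Hb). pose proof (pos_INR X).
        assert (1 <= INR N) by (apply (le_INR 1); auto). field. split; [lra|]. assert (0 < INR N * INR (b ^ J)) by nra. lra.
      * reflexivity.
    + transitivity (rsum (b ^ J) (fun _ => 0)); [|apply rsum_const0]. apply rsum_ext. intros X HX.
      destruct (_ <=? _)%nat; auto. unfold Hterm. rewrite kdig_concat by auto.
      destruct (Nat.eqb_spec (kdig b d N + cnt_len b d J X) k); [lia|]. rewrite Bool.andb_false_r. reflexivity.
  - transitivity (rsum (b ^ J) (fun _ => 0)); [|apply rsum_const0]. apply rsum_ext. intros X HX.
    assert (E : (N * b ^ J + X < b ^ (l - 1) * b ^ J)%nat).
    { assert (S N * b ^ J <= b ^ (l - 1) * b ^ J)%nat by (apply Nat.mul_le_mono_r; lia). simpl in H. lia. }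
    destruct (Nat.leb_spec (b ^ (l - 1) * b ^ J) (N * b ^ J + X)); [lia|reflexivity]. Qed.

Lemma blocks b d k l : (2 <= b)%nat -> (1 <= l)%nat -> forall J,
  rsum (b ^ (l - 1 + J)) (Hterm b d k) = low_part b d k l +
  rsum J (fun j => block_sum b d k l (fun N => mt b d (k - kdig b d N) (fun x => / (INR N + x)) j)).
Proof. intros Hb Hl J. induction J.
  - rewrite Nat.add_0_r, rsum_0, Rplus_0_r. reflexivity.
  - rewrite rsum_S, <- Rplus_assoc, <- IHJ.
    rewrite (rsum_split (b ^ (l - 1 + J))).
    2:{ apply Nat.pow_le_mono_r; lia. }
    f_equal. replace (l - 1 + S J)%nat with (l + J)%nat by lia. rewrite Nat.pow_add_r, rsum_mul.
    unfold block_sum. apply rsum_ext. intros N HN. apply block_term; auto. Qed.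

Lemma lim_rsum A (f : nat -> nat -> R) (L : nat -> R) :
  (forall i, (i < A)%nat -> is_lim_seq (fun J => f J i) (L i)) ->
  is_lim_seq (fun J => rsum A (fun i => f J i)) (rsum A L).
Proof. induction A; intros H.
  - rewrite rsum_0. apply (is_lim_seq_ext (fun _ => 0)). intros; reflexivity. apply is_lim_seq_const.
  - rewrite rsum_S. apply (is_lim_seq_ext (fun J => rsum A (fun i => f J i) + f J A)).
    intros; rewrite rsum_S; auto. apply is_lim_seq_plus'. apply IHA; intros; apply H; lia. apply H; lia. Qed.

Lemma series_rsum A (f : nat -> nat -> R) (L : nat -> R) :
  (forall i, (i < A)%nat -> is_series (fun m => f m i) (L i)) ->
  is_series (fun m => rsum A (fun i => f m i)) (rsum A L).
Proof. intros H. apply is_series_rsum.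
  apply (is_lim_seq_ext (fun n => rsum A (fun i => rsum n (fun m => f m i)))).
  intros n. symmetry. apply rsum_swap.
  apply lim_rsum. intros i Hi. apply is_series_rsum. auto. Qed.

Lemma is_series_0 : is_series (fun _ : nat => 0) 0.
Proof. apply is_series_rsum. apply (is_lim_seq_ext (fun _ => 0)). intros; rewrite rsum_const0; auto.
  apply is_lim_seq_const. Qed.

Lemma mono_le (u : nat -> R) : (forall n, u n <= u (S n)) -> forall m n, (m <= n)%nat -> u m <= u n.
Proof. intros H m n Hmn. induction Hmn. lra. specialize (H m0). lra. Qed.

Lemma mono_subseq_lim (u : nat -> R) (phi : nat -> nat) (L : R) :
  (forall n, u n <= u (S n)) -> (forall n, (n <= phi n)%nat) ->
  (forall J J', (J <= J')%nat -> (phi J <= phi J')%nat) ->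
  is_lim_seq (fun J => u (phi J)) L -> is_lim_seq u L.
Proof. intros Hu Hphi Hmon HL.
  assert (Hm := mono_le u Hu).
  apply is_lim_seq_spec in HL.
  assert (Hbd : forall J, u (phi J) <= L).
  { intros J. destruct (Rle_or_lt (u (phi J)) L) as [|Hc]; auto.
    destruct (HL (mkposreal _ (Rlt_Rminus _ _ Hc))) as [N HN].
    specialize (HN (Nat.max J N) (Nat.le_max_r _ _)). simpl in HN.
    assert (u (phi J) <= u (phi (Nat.max J N))) by (apply Hm, Hmon, Nat.le_max_l).
    apply Rabs_def2 in HN. lra. }
  apply is_lim_seq_spec. intros eps. destruct (HL eps) as [N HN]. exists (phi N). intros n Hn.
  specialize (HN N (Nat.le_refl _)). simpl in HN. apply Rabs_def2 in HN.
  assert (u (phi N) <= u n) by (apply Hm; auto).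
  assert (u n <= u (phi n)) by (apply Hm; auto). specialize (Hbd n).
  apply Rabs_def1; lra. Qed.

Lemma Hterm_nonneg b d k n : 0 <= Hterm b d k n.
Proof. unfold Hterm. destruct (1 <=? n)%nat eqn:E; simpl; [|lra].
  apply Nat.leb_le in E. destruct (_ =? _)%nat; [|lra]. left. apply Rinv_0_lt_compat, lt_0_INR. lia. Qed.

Lemma H_series b d k l : (2 <= b)%nat -> (d < b)%nat -> (1 <= l)%nat ->
  is_series (Hterm b d k) (low_part b d k l +
    block_sum b d k l (fun N => mu_integral b d (k - kdig b d N) (fun x => / (INR N + x)))).
Proof. intros Hb Hd Hl. apply is_series_rsum.
  apply (mono_subseq_lim _ (fun J => b ^ (l - 1 + J))%nat).
  - intros n. rewrite rsum_S. pose proof (Hterm_nonneg b d k n). lra.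
  - intros n. assert (n < b ^ n)%nat by (apply Nat.pow_gt_lin_r; lia).
    assert (b ^ n <= b ^ (l - 1 + n))%nat by (apply Nat.pow_le_mono_r; lia). lia.
  - intros J J' HJ. apply Nat.pow_le_mono_r; lia.
  - apply (is_lim_seq_ext (fun J => low_part b d k l +
      rsum J (fun j => block_sum b d k l (fun N => mt b d (k - kdig b d N) (fun x => / (INR N + x)) j)))).
    intros J. symmetry. apply blocks; auto.
    apply is_lim_seq_plus'. apply is_lim_seq_const.
    unfold block_sum.
    apply (is_lim_seq_ext (fun J => rsum (b ^ l) (fun N => rsum J (fun j =>
       if andb (b ^ (l - 1) <=? N)%nat (kdig b d N <=? k)%nat
       then mt b d (k - kdig b d N) (fun x => / (INR N + x)) j else 0)))).
    intros J. apply rsum_swap.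
    apply lim_rsum. intros N HN.
    destruct (andb (b ^ (l - 1) <=? N)%nat (kdig b d N <=? k)%nat) eqn:E.
    + apply is_series_rsum. apply Series_correct. apply mu_g_ex; auto.
      apply andb_prop in E. destruct E as [E _]. apply Nat.leb_le in E.
      pose proof (pow_pos_nat b (l - 1) Hb). apply (le_INR 1). lia.
    + apply (is_lim_seq_ext (fun _ => 0)). intros; rewrite rsum_const0; auto. apply is_lim_seq_const. Qed.

Theorem mainTheorem8 (b d k l : nat) :
  (2 <= b)%nat -> (d < b)%nat -> (1 <= l)%nat ->
  ex_series (Hterm b d k) /\
  (ex_series (fun m => tail_u b d k l (S m)) /\
   H b d k = low_part b d k l
             + INR b * block_sum b d k l (fun n => / INR n)
             + Series (fun m => tail_u b d k l (S m))) /\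
  (ex_series (fun m => tail_v b d k l (S m)) /\
   H b d k = low_part b d k l
             + INR b * block_sum b d k l (fun n => / INR (n + 1))
             + Series (fun m => tail_v b d k l (S m))).
Proof. intros Hb Hd Hl.
  pose proof (H_series b d k l Hb Hd Hl) as HS.
  assert (HH : H b d k = low_part b d k l +
    block_sum b d k l (fun N => mu_integral b d (k - kdig b d N) (fun x => / (INR N + x)))).
  { unfold H. apply is_series_unique. auto. }
  assert (Hge : forall N, andb (b ^ (l - 1) <=? N)%nat (kdig b d N <=? k)%nat = true -> (1 <= N)%nat).
  { intros N E. apply andb_prop in E. destruct E as [E _]. apply Nat.leb_le in E.
    pose proof (pow_pos_nat b (l - 1) Hb). lia. }
  assert (TU : is_series (fun m => tail_u b d k l (S m))
     (block_sum b d k l (fun N => mu_integral b d (k - kdig b d N) (fun x => / (INR N + x)) - INR b / INR N))).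
  { apply (is_series_extR (fun m => rsum (b ^ l) (fun N =>
       if andb (b ^ (l - 1) <=? N)%nat (kdig b d N <=? k)%nat
       then (-1) ^ (S m) * (u_mom b d (k - kdig b d N) (S m) / INR N ^ (S m + 1)) else 0))).
    { intros m. unfold tail_u, block_sum. rewrite <- rsum_scal. apply rsum_ext. intros N _.
      destruct (andb _ _); ring. }
    unfold block_sum. apply series_rsum. intros N _.
    destruct (andb (b ^ (l - 1) <=? N)%nat (kdig b d N <=? k)%nat) eqn:E.
    - apply per_u; auto.
    - apply is_series_0. }
  assert (TV : is_series (fun m => tail_v b d k l (S m))
     (block_sum b d k l (fun N => mu_integral b d (k - kdig b d N) (fun x => / (INR N + x)) - INR b / INR (N + 1)))).
  { apply (is_series_extR (fun m => rsum (b ^ l) (fun N =>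
       if andb (b ^ (l - 1) <=? N)%nat (kdig b d N <=? k)%nat
       then v_mom b d (k - kdig b d N) (S m) / INR (N + 1) ^ (S m + 1) else 0))).
    { intros m. unfold tail_v, block_sum. reflexivity. }
    unfold block_sum. apply series_rsum. intros N _.
    destruct (andb (b ^ (l - 1) <=? N)%nat (kdig b d N <=? k)%nat) eqn:E.
    - apply per_v; auto.
    - apply is_series_0. }
  split; [eexists; exact HS|]. split; split.
  - eexists; exact TU.
  - rewrite (is_series_unique _ _ TU), HH. unfold block_sum. rewrite <- rsum_scal, Rplus_assoc, <- rsum_plus.
    f_equal. apply rsum_ext. intros N _. destruct (andb _ _); [unfold Rdiv; ring|ring].
  - eexists; exact TV.
  - rewrite (is_series_unique _ _ TV), HH. unfold block_sum. rewrite <- rsum_scal, Rplus_assoc, <- rsum_plus.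
    f_equal. apply rsum_ext. intros N _. destruct (andb _ _); [unfold Rdiv; ring|ring].
Qed.
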